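(* Let $J'=(z_w,z_w')$ be a nonempty open interval, let $r:J'\to\mathbb{R}$ be differentiable and non-increasing on $J'$, and let $h:J'\to\mathbb{R}$ be differentiable with $\dot h(z)=1+h(z)^2-2r(z)h(z)$ for all $z\in J'$. Assume $h$ has exactly one zero $z_*$ in $J'$. Let $G(z)=z-\dfrac{2h(z)}{2+h(z)^2-2r(z)h(z)}$ and consider the iteration $z_{n+1}=G(z_n)$, $n=0,1,2,\dots$. (1) If $r(z)>0$ for all $z\in(z_w,z_* )$, then for every initial guess $z_0\in(z_w,z_* )$ all iterates are well defined, the sequence $(z_n)$ is monotonically increasing, lies in $(z_w,z_* )$, and converges to $z_*$. (2) If $r(z)<0$ for all $z\in(z_*,z_w')$, then for every initial guess $z_0\in(z_*,z_w')$ all iterates are well defined, the sequence $(z_n)$ is monotonically decreasing, lies in $(z_*,z_w')$, and converges to $z_*$.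
   Context: $\dot h$ denotes $dh/dz$. Since $h(z_* )=0$ and $\dot h(z_* )=1$, uniqueness of the zero gives $h<0$ on $(z_w,z_* )$ and $h>0$ on $(z_*,z_w')$. (In the intended application $z_w<z_w'$ are consecutive poles of $h$.) *)

(* Defs.v *)
From Stdlib Require Import Reals.
Open Scope R_scope.

Definition Gmap (h r : R -> R) (z : R) : R :=
  z - 2 * h z / (2 + h z ^ 2 - 2 * r z * h z).

(* Denominator of G; "G(z) well defined" means this is nonzero. *)
Definition Gden (h r : R -> R) (z : R) : R := 2 + h z ^ 2 - 2 * r z * h z.

Fixpoint iterG (h r : R -> R) (z0 : R) (n : nat) : R :=
  match n with
  | O => z0
  | S m => Gmap h r (iterG h r z0 m)
  end.

(* Main.v *)
Require Import Defs.
From Stdlib Require Import Reals Lra Lia.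
From Coquelicot Require Import Coquelicot.
Open Scope R_scope.

Lemma cont_of_der (f : R -> R) x l : derivable_pt_lim f x l -> continuity_pt f x.
Proof. intro H. apply derivable_continuous_pt. exists l. exact H. Qed.

Lemma neg_left (zw zw' zs : R) (r h : R -> R) :
  (forall z, zw<z<zw' -> derivable_pt_lim h z (1 + h z ^ 2 - 2 * r z * h z)) ->
  zw<zs<zw' -> h zs = 0 -> (forall z, zw<z<zw' -> h z = 0 -> z = zs) ->
  forall x, zw<x<zs -> h x < 0.
Proof.
  intros Hd Hs H0 Hu x Hx.
  destruct (Rtotal_order (h x) 0) as [Hl|[He|Hg]]; [exact Hl| |].
  - assert (x = zs) by (apply Hu; auto; lra). lra.
  - exfalso.
    pose proof (Hd zs Hs) as D. rewrite H0 in D.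
    replace (1 + 0^2 - 2*r zs*0) with 1 in D by ring.
    destruct (D (1/2) ltac:(lra)) as [dl Hdl].
    pose proof (cond_pos dl) as Hdp.
    set (k := - Rmin (dl/2) ((zs - x)/2)).
    assert (Hk1 : - (dl/2) <= k) by (unfold k; pose proof (Rmin_l (dl/2) ((zs-x)/2)); lra).
    assert (Hk2 : - ((zs-x)/2) <= k) by (unfold k; pose proof (Rmin_r (dl/2) ((zs-x)/2)); lra).
    assert (Hk3 : k < 0).
    { unfold k. apply Rmin_case; lra. }
    specialize (Hdl k ltac:(lra)).
    assert (Hak : Rabs k < dl) by (rewrite Rabs_left; lra).
    specialize (Hdl Hak).
    apply Rabs_def2 in Hdl.
    set (q := (h (zs + k) - 0) / k) in Hdl.
    assert (Hq : h (zs + k) = q * k) by (unfold q; field; lra).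
    rewrite H0 in Hdl. fold q in Hdl. assert (Hq2 : q > 1/2) by (destruct Hdl; lra).
    assert (Hy : h (zs + k) < 0) by nra.
    destruct (Ranalysis5.IVT_interv (fun t => - h t) x (zs + k)) as [w [Hw1 Hw2]].
    + intros a Ha. apply continuity_pt_opp. apply cont_of_der with (1 + h a ^ 2 - 2 * r a * h a).
      apply Hd; lra.
    + lra.
    + lra.
    + lra.
    + assert (w = zs) by (apply Hu; lra). lra.
Qed.
Lemma key_step (zw zw' zs : R) (r h : R -> R) :
  (forall x y, zw < x -> x <= y -> y < zw' -> r y <= r x) ->
  (forall z, zw<z<zw' -> derivable_pt_lim h z (1 + h z ^ 2 - 2 * r z * h z)) ->
  zw<zs<zw' -> h zs = 0 -> (forall z, zw<z<zw' -> h z = 0 -> z = zs) ->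
  (forall z, zw<z<zs -> 0 < r z) ->
  forall z, zw<z<zs -> 2 < Gden h r z /\ z < Gmap h r z < zs.
Proof.
  intros Hm Hd Hs H0 Hu Hr z Hz.
  pose proof (neg_left zw zw' zs r h Hd Hs H0 Hu) as Hneg.
  assert (ha : h z < 0) by (apply Hneg; lra).
  assert (hr : 0 < r z) by (apply Hr; lra).
  set (a := h z) in *. set (r0 := r z) in *.
  assert (HD : 2 < Gden h r z) by (unfold Gden; fold a r0; nra).
  set (M := 1 + a^2/2 - r0*a).
  assert (HM : 1 < M) by (unfold M; nra).
  assert (HG : Gmap h r z = z - a / M).
  { unfold Gmap; fold a r0; unfold M; field; nra. }
  split; [exact HD|]. rewrite HG.
  split.
  { assert (0 < - a / M) by (apply Rdiv_lt_0_compat; lra).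
    unfold Rdiv in *. lra. }
  set (s := a - 2*r0). set (m := a/2).
  set (Psi := fun y => y/M - s*(y-m)^2/(2*M^2)).
  set (dPsi := fun y => 1/M - s*(y-m)/M^2).
  set (hd := fun t => 1 + h t ^ 2 - 2 * r t * h t).
  set (g := fun t => t - Psi (h t)).
  set (g' := fun t => 1 - dPsi (h t) * hd t).
  assert (HPsi : forall y, derivable_pt_lim Psi y (dPsi y)).
  { intro y. apply is_derive_Reals. unfold Psi, dPsi. auto_derive; [trivial|]. field. lra. }
  assert (Hg : forall c, z <= c <= zs -> derivable_pt_lim g c (g' c)).
  { intros c Hc.
    pose proof (derivable_pt_lim_comp h Psi c _ _ (Hd c ltac:(lra)) (HPsi (h c))) as A.
    pose proof (derivable_pt_lim_minus id (comp Psi h) c _ _ (derivable_pt_lim_id c) A) as B.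
    exact B. }
  destruct (MVT_cor2 g g' z zs ltac:(lra) Hg) as [c [Ec Hc]].
  assert (hdpos : forall t, zw < t < zs -> 0 < hd t).
  { intros t Ht. unfold hd. pose proof (Hneg t Ht). pose proof (Hr t Ht). nra. }
  assert (yneg : h c < 0) by (apply Hneg; lra).
  assert (yga : a < h c).
  { assert (Hh : forall t, z <= t <= c -> derivable_pt_lim h t (hd t)).
    { intros t Ht. apply Hd. lra. }
    destruct (MVT_cor2 h hd z c ltac:(lra) Hh) as [d [Ed Hdd]].
    pose proof (hdpos d ltac:(lra)). fold a in Ed. nra. }
  assert (rc : r c <= r0) by (apply Hm; lra).
  assert (hdc : 0 < hd c) by (apply hdpos; lra).
  assert (hdle : hd c <= 1 + h c ^ 2 - 2 * r0 * h c) by (unfold hd; nra).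
  assert (gpos : 0 < g' c).
  { unfold g'. set (y := h c) in *.
    destruct (Rle_or_lt (dPsi y) 0) as [Hp|Hp].
    - nra.
    - assert (I1 : dPsi y * (1 + s*y) = 1 - (s*(y-m)/M)^2).
      { unfold dPsi, m. cbv beta. replace (1 + s*y) with (M + s*(y - a/2)) by (unfold M, s; field). field. lra. }
      assert (I2 : 1 + y ^ 2 - 2 * r0 * y = (1 + s*y) + y*(y-a)) by (unfold s; ring).
      assert (0 <= (s*(y-m)/M)^2) by (apply pow2_ge_0).
      assert (dPsi y * hd c <= dPsi y * (1 + y ^ 2 - 2 * r0 * y)) by nra.
      rewrite I2 in H1. assert (0 < y*(a-y)) by nra. nra. }
  assert (E2 : g zs - g z > 0) by (rewrite Ec; nra).
  unfold g in E2. rewrite H0 in E2. fold a in E2.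
  assert (E3 : Psi 0 - Psi a = - a / M) by (unfold Psi, m; cbv beta; field; lra).
  unfold Rdiv in *. lra.
Qed.
Lemma cont_G (h r : R -> R) l :
  continuity_pt h l -> continuity_pt r l -> Gden h r l <> 0 -> continuity_pt (Gmap h r) l.
Proof.
  intros Ch Cr Hd.
  assert (Cc : forall c, continuity_pt (fct_cte c) l)
    by (intro c; apply derivable_continuous_pt, derivable_pt_const).
  assert (C : continuity_pt (id - (fct_cte 2 * h) / (fct_cte 2 + h * h - fct_cte 2 * r * h))%F l).
  { apply continuity_pt_minus.
    - apply derivable_continuous_pt, derivable_pt_id.
    - apply continuity_pt_div.
      + apply continuity_pt_mult; auto.
      + apply continuity_pt_minus; [apply continuity_pt_plus|]; repeat apply continuity_pt_mult; auto.
      + unfold Gden in Hd. unfold plus_fct, minus_fct, mult_fct, fct_cte.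
        replace (h l * h l) with (h l ^ 2) by ring. exact Hd. }
  refine (continuity_pt_locally_ext _ _ 1 l ltac:(lra) _ C).
  intros y _. unfold Gmap, plus_fct, minus_fct, mult_fct, div_fct, fct_cte, id.
  replace (h y * h y) with (h y ^ 2) by ring. reflexivity.
Qed.
Lemma part1 (zw zw' zs : R) (r h : R -> R) :
  (forall z, zw<z<zw' -> continuity_pt r z) ->
  (forall x y, zw < x -> x <= y -> y < zw' -> r y <= r x) ->
  (forall z, zw<z<zw' -> derivable_pt_lim h z (1 + h z ^ 2 - 2 * r z * h z)) ->
  zw<zs<zw' -> h zs = 0 -> (forall z, zw<z<zw' -> h z = 0 -> z = zs) ->
  (forall z, zw<z<zs -> 0 < r z) ->
  forall z0, zw<z0<zs ->
     (forall n, Gden h r (iterG h r z0 n) <> 0 /\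
                zw < iterG h r z0 n < zs /\
                iterG h r z0 n < iterG h r z0 (S n)) /\
     Un_cv (iterG h r z0) zs.
Proof.
  intros Hc Hm Hd Hs H0 Hu Hr z0 Hz0.
  pose proof (key_step zw zw' zs r h Hm Hd Hs H0 Hu Hr) as K.
  set (u := iterG h r z0).
  assert (Hin : forall n, zw < u n < zs).
  { induction n as [|n IH]; [simpl; exact Hz0|].
    change (u (S n)) with (Gmap h r (u n)). destruct (K _ IH) as [_ K2]. lra. }
  assert (All : forall n, Gden h r (u n) <> 0 /\ zw < u n < zs /\ u n < u (S n)).
  { intro n. destruct (K _ (Hin n)) as [K1 K2]. change (u (S n)) with (Gmap h r (u n)).
    repeat split; try lra; apply Hin. }
  split; [exact All|].
  assert (Gr : Un_growing u) by (intro n; destruct (All n) as [_ [_ X]]; lra).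
  destruct (growing_cv u Gr) as [l Hl].
  { exists zs. intros x [i ->]. destruct (Hin i); lra. }
  assert (Hl1 : z0 <= l) by (apply (growing_ineq u l Gr Hl 0%nat)).
  assert (Hl2 : l <= zs).
  { apply (Rle_cv_lim (Un := u) (Vn := fun _ => zs)); auto.
    - intro n. destruct (Hin n); lra.
    - intros e He. exists 0%nat. intros. unfold Rdist. rewrite Rminus_diag, Rabs_R0. lra. }
  assert (Dl : Gden h r l <> 0).
  { destruct (Rle_lt_or_eq_dec l zs Hl2) as [Hlt|Heq].
    - destruct (K l ltac:(lra)). lra.
    - subst l. unfold Gden. rewrite H0. lra. }
  assert (Cl : continuity_pt (Gmap h r) l).
  { apply cont_G; auto.
    - apply cont_of_der with (1 + h l ^ 2 - 2 * r l * h l). apply Hd. lra.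
    - apply Hc. lra. }
  pose proof (continuity_seq _ _ _ Cl Hl) as A.
  assert (B : Un_cv (fun n => Gmap h r (u n)) l).
  { intros e He. destruct (Hl e He) as [N HN]. exists N. intros n Hn.
    change (Gmap h r (u n)) with (u (S n)). apply HN. lia. }
  pose proof (UL_sequence _ _ _ A B) as E.
  assert (Hh : h l = 0).
  { assert (h l = (l - Gmap h r l) * Gden h r l / 2) by (unfold Gmap, Gden; field; exact Dl).
    rewrite H, E. lra. }
  assert (l = zs) by (apply Hu; auto; lra).
  subst l. exact Hl.
Qed.
Lemma iter_sym (h r : R -> R) z0 n :
  iterG (fun t => - h (- t)) (fun t => - r (- t)) (- z0) n = - iterG h r z0 n /\
  Gden (fun t => - h (- t)) (fun t => - r (- t)) (- iterG h r z0 n) = Gden h r (iterG h r z0 n).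
Proof.
  induction n as [|n [IH _]].
  - simpl. split; [reflexivity|]. unfold Gden. rewrite Ropp_involutive. ring.
  - assert (Den : forall x, Gden (fun t => - h (- t)) (fun t => - r (- t)) (- x) = Gden h r x).
    { intro x. unfold Gden. rewrite Ropp_involutive. ring. }
    split; [|apply Den].
    simpl. rewrite IH. unfold Gmap. specialize (Den (iterG h r z0 n)). unfold Gden in Den.
    rewrite Den. rewrite Ropp_involutive. unfold Rdiv. ring.
Qed.

Theorem theorem3p2 (zw zw' : R) (r h : R -> R) (zstar : R) :
  zw < zw' ->
  (forall z, zw < z < zw' -> exists l, derivable_pt_lim r z l) ->
  (forall x y, zw < x -> x <= y -> y < zw' -> r y <= r x) ->
  (forall z, zw < z < zw' ->
     derivable_pt_lim h z (1 + h z ^ 2 - 2 * r z * h z)) ->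
  zw < zstar < zw' -> h zstar = 0 ->
  (forall z, zw < z < zw' -> h z = 0 -> z = zstar) ->
  ((forall z, zw < z < zstar -> 0 < r z) ->
   forall z0, zw < z0 < zstar ->
     (forall n, Gden h r (iterG h r z0 n) <> 0 /\
                zw < iterG h r z0 n < zstar /\
                iterG h r z0 n < iterG h r z0 (S n)) /\
     Un_cv (iterG h r z0) zstar) /\
  ((forall z, zstar < z < zw' -> r z < 0) ->
   forall z0, zstar < z0 < zw' ->
     (forall n, Gden h r (iterG h r z0 n) <> 0 /\
                zstar < iterG h r z0 n < zw' /\
                iterG h r z0 (S n) < iterG h r z0 n) /\
     Un_cv (iterG h r z0) zstar).
Proof.
  intros Hlt Hrd Hm Hd Hs H0 Hu.
  assert (Hc : forall z, zw<z<zw' -> continuity_pt r z).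
  { intros z Hz. destruct (Hrd z Hz) as [l Hl]. exact (cont_of_der r z l Hl). }
  split.
  { intros Hr. exact (part1 zw zw' zstar r h Hc Hm Hd Hs H0 Hu Hr). }
  intros Hr z0 Hz0.
  set (k := fun t => - h (- t)). set (s := fun t => - r (- t)).
  assert (Hc' : forall z, -zw' < z < -zw -> continuity_pt s z).
  { intros z Hz. unfold s.
    change (fun t => - r (- t)) with (- (comp r (- id)))%F.
    apply continuity_pt_opp. apply continuity_pt_comp.
    - apply continuity_pt_opp. apply derivable_continuous_pt, derivable_pt_id.
    - apply Hc. unfold opp_fct, id. lra. }
  assert (Hm' : forall x y, -zw' < x -> x <= y -> y < -zw -> s y <= s x).
  { intros x y Hx Hxy Hy. unfold s. assert (r (-x) <= r (-y)) by (apply Hm; lra). lra. }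
  assert (Hd' : forall z, -zw'<z< -zw -> derivable_pt_lim k z (1 + k z ^ 2 - 2 * s z * k z)).
  { intros z Hz.
    pose proof (derivable_pt_lim_opp _ _ _ (derivable_pt_lim_id z)) as A.
    pose proof (derivable_pt_lim_comp _ h z _ _ A (Hd (- z) ltac:(unfold opp_fct, id; lra))) as B.
    pose proof (derivable_pt_lim_opp _ _ _ B) as C.
    unfold k, s. unfold opp_fct, id in C.
    replace (1 + (- h (- z)) ^ 2 - 2 * - r (- z) * - h (- z))
      with (- ((1 + h (- z) ^ 2 - 2 * r (- z) * h (- z)) * - (1))) by ring.
    exact C. }
  assert (Hs' : -zw' < -zstar < -zw) by lra.
  assert (H0' : k (- zstar) = 0) by (unfold k; rewrite Ropp_involutive, H0; ring).
  assert (Hu' : forall z, -zw'<z< -zw -> k z = 0 -> z = - zstar).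
  { intros z Hz Hk. unfold k in Hk. assert (- z = zstar) by (apply Hu; lra). lra. }
  assert (Hr' : forall z, -zw'<z< -zstar -> 0 < s z).
  { intros z Hz. unfold s. assert (r (-z) < 0) by (apply Hr; lra). lra. }
  destruct (part1 (-zw') (-zw) (-zstar) s k Hc' Hm' Hd' Hs' H0' Hu' Hr' (- z0) ltac:(lra))
    as [P Q].
  split.
  - intro n. destruct (P n) as [P1 [P2 P3]].
    destruct (iter_sym h r z0 n) as [E1 E2]. destruct (iter_sym h r z0 (S n)) as [E3 _].
    fold k s in E1, E2, E3. rewrite E1 in P1, P2, P3. rewrite E3 in P3. rewrite E2 in P1.
    repeat split; lra.
  - intros e He. destruct (Q e He) as [N HN]. exists N. intros n Hn.
    specialize (HN n Hn). destruct (iter_sym h r z0 n) as [E1 _]. fold k s in E1.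
    rewrite E1 in HN. unfold Rdist in *.
    replace (- iterG h r z0 n - - zstar) with (- (iterG h r z0 n - zstar)) in HN by ring.
    rewrite Rabs_Ropp in HN. exact HN.
Qed.
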